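(* Let $\zeta=(m+r+\ell)/(m+r)$ be the money multiplier. (i) In an ample-reserves equilibrium, if aggregate cash $m$ is sufficiently small (holding the other equilibrium quantities and their derivatives fixed), then $\partial\zeta/\partial i>0$ and $\partial\zeta/\partial i_r<0$. (ii) Suppose $L^{-1}(i_\ell)>\bar\delta$. In both ample-reserves and scarce-reserves equilibria, if $m>0$ and $\chi<1$, then $\partial\zeta/\partial\bar\delta<0$.
   Context: Buyers meet sellers in one of three meeting types with probabilities $\sigma_1,\sigma_2,\sigma_3>0$ ($\sum\sigma_j=1$); type-1 buyers can only use cash, type-2 buyers can use cash, deposits and bank notes, type-3 buyers can additionally use unsecured credit up to a limit $\bar\delta\ge0$. DM preferences $u,c$ with $u'>0,u''<0$, $c'>0,c''\ge0$, $u(0)=c(0)=0$, $q^*$ solving $u'(q^* )=c'(q^* )$; bargaining power $\theta\in(0,1]$, payment $v(q)=(1-\theta)u(q)+\theta c(q)$, liquidity premium $\lambda(q)=\theta[u'(q)-c'(q)]/[(1-\theta)u'(q)+\theta c'(q)]$ for $q<q^*$ and $0$ otherwise, $L(z)=\lambda(\min\{q^*,v^{-1}(z)\})$ with decreasing inverse $L^{-1}$. Policy: nominal rate $i\ge0$, interest on reserves $i_r$, reserve requirement $\chi\in(0,1)$, $a=(1-\chi)/\chi$. Bank cost functions $\gamma,\eta$ twice differentiable with $\gamma',\gamma'',\eta',\eta''>0$ on $(0,\infty)$, $\gamma(0)=\gamma'(0)=\eta(0)=\eta'(0)=0$; entry cost $k>0$; $1+i=(1+i_d)(1+i_\ell)$.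 There is a measure $n$ of identical banks each holding reserves $\tilde r$ and lending $\tilde\ell$; aggregate reserves $r=n\tilde r$, aggregate loans (bank notes) $\ell=n\tilde\ell$; aggregate cash $m=\sum_j\sigma_jm_j$ is held only by type-1 buyers in banking equilibria, $m=\sigma_1L^{-1}(i)$ (decreasing in $i$). Ample-reserves equilibrium: $(\tilde r,\tilde\ell)$ solve $[1+\eta'(\tilde\ell)][1+i_r-\gamma'(\tilde r)]=1+i$ and $\gamma'(\tilde r)\tilde r-\gamma(\tilde r)+\eta'(\tilde\ell)\tilde\ell-\eta(\tilde\ell)=k$, $i_d=i_r-\gamma'(\tilde r)$, $i_\ell=\eta'(\tilde\ell)$, $\tilde\ell<a\tilde r$; $n$ solves $(\sigma_2+\sigma_3)L^{-1}(i_\ell)-\sigma_3\bar\delta=n[(1+i_d)\tilde r+\tilde\ell]$. Scarce-reserves equilibrium: $\tilde\ell=a\tilde r$ (so $\ell=ar$ and $\zeta=(m+r/\chi)/(m+r)$), $(\tilde r,i_d)$ solve $\gamma'(\tilde r)\tilde r-\gamma(\tilde r)+\eta'(a\tilde r)a\tilde r-\eta(a\tilde r)=k$ and $i_d=i_r-\gamma'(\tilde r)+[i_\ell-\eta'(a\tilde r)]a$, and $r=\frac{(\sigma_2+\sigma_3)\chi}{1+i_d\chi}L^{-1}(i_\ell)-\frac{\sigma_3\bar\delta\chi}{1+i_d\chi}$. *)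

(* Defs.v *)
From Stdlib Require Import Reals.
From Coquelicot Require Import Coquelicot.
Open Scope R_scope.

Definition cost_fn (f : R -> R) : Prop :=
  (forall x, ex_derive f x) /\
  (forall x, ex_derive (Derive f) x) /\
  (forall x, 0 < x -> 0 < Derive f x) /\
  (forall x, 0 < x -> 0 < Derive (Derive f) x) /\
  f 0 = 0 /\ Derive f 0 = 0.

(* Primitives of the economy that are held fixed in the comparative statics:
   meeting probabilities, reserve requirement chi, entry cost k,
   bank cost functions gamma, eta, and the inverse liquidity-premium map L^{-1}. *)
Record Econ := mkEcon {
  s1 : R; s2 : R; s3 : R;
  chi : R;
  kcost : R;
  gam : R -> R;
  eta : R -> R;
  Linv : R -> R }.

Definition econ_ok (E : Econ) : Prop :=
  0 < s1 E /\ 0 < s2 E /\ 0 < s3 E /\ s1 E + s2 E + s3 E = 1 /\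
  0 < chi E < 1 /\ 0 < kcost E /\
  cost_fn (gam E) /\ cost_fn (eta E) /\
  (forall x y, 0 <= x < y -> Linv E y < Linv E x).

Definition acoef (E : Econ) : R := (1 - chi E) / chi E.

Definition cash (E : Econ) (i : R) : R := s1 E * Linv E i.

Definition zeta (m r l : R) : R := (m + r + l) / (m + r).

(* Ample-reserves equilibrium at policy (i, i_r) and credit limit db, with
   per-bank reserves rt, per-bank loans lt and measure of banks n.
   i_d = i_r - gamma'(rt), i_l = eta'(lt). *)
Definition ample_eq (E : Econ) (i ir db rt lt n : R) : Prop :=
  0 <= i /\ 0 < rt /\ 0 < lt /\ 0 < n /\
  (1 + Derive (eta E) lt) * (1 + ir - Derive (gam E) rt) = 1 + i /\
  Derive (gam E) rt * rt - gam E rt + Derive (eta E) lt * lt - eta E lt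
    = kcost E /\
  lt < acoef E * rt /\
  (s2 E + s3 E) * Linv E (Derive (eta E) lt) - s3 E * db
    = n * ((1 + (ir - Derive (gam E) rt)) * rt + lt).

(* Scarce-reserves equilibrium at (i, i_r, db): per-bank reserves rt,
   per-bank loans a*rt, deposit rate id, loan rate il (with the binding
   constraint's multiplier il - eta'(a rt) >= 0), aggregate reserves r. *)
Definition scarce_eq (E : Econ) (i ir db rt id il r : R) : Prop :=
  0 <= i /\ 0 < rt /\ 0 < r /\
  Derive (eta E) (acoef E * rt) <= il /\
  Derive (gam E) rt * rt - gam E rt
    + Derive (eta E) (acoef E * rt) * (acoef E * rt) - eta E (acoef E * rt)
    = kcost E /\
  id = ir - Derive (gam E) rt + (il - Derive (eta E) (acoef E * rt)) * acoef E /\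
  1 + i = (1 + id) * (1 + il) /\
  r = (s2 E + s3 E) * chi E / (1 + id * chi E) * Linv E il
      - s3 E * db * chi E / (1 + id * chi E).

(* Main.v *)
Require Import Defs.
From Stdlib Require Import Reals Lra Psatz.
From Coquelicot Require Import Coquelicot.
Open Scope R_scope.

Ltac eta := repeat match goal with |- context [fun y : R => ?f y] => change (fun y : R => f y) with f end.

Lemma loc_of (x0 d : R) (P : R -> Prop) : 0 < d -> (forall x, Rabs (x - x0) < d -> P x) -> locally x0 P.
Proof. intros Hd H. exists (mkposreal d Hd). intros y Hy. apply H. exact Hy. Qed.

Lemma deriv_loc_eq (f g : R -> R) x0 D1 D2 : locally x0 (fun t => f t = g t) ->
  is_derive f x0 D1 -> is_derive g x0 D2 -> D1 = D2.
Proof.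
  intros Hl H1 H2. apply (is_derive_ext_loc _ _ _ _ Hl) in H1.
  apply is_derive_unique in H1. apply is_derive_unique in H2. congruence.
Qed.

Lemma strict_incr (f df : R -> R) : (forall x, 0 < x -> is_derive f x (df x)) ->
  (forall x, 0 < x -> df x > 0) -> forall x y, 0 < x -> x < y -> f x < f y.
Proof.
  intros Hd Hp x y Hx Hxy.
  apply (incr_function f (Finite 0) p_infty df); simpl; auto.
Qed.

Lemma G_deriv g x : cost_fn g -> is_derive (fun r => Derive g r * r - g r) x (Derive (Derive g) x * x).
Proof.
  intros [H1 [H2 _]]. auto_derive. repeat split; auto.
  eta. ring.
Qed.

Lemma gp_incr g : cost_fn g -> forall x y, 0 < x -> x < y -> Derive g x < Derive g y.
Proof.
  intros Hg. destruct Hg as [H1 [H2 [H3 [H4 _]]]].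
  apply (strict_incr _ (Derive (Derive g))); auto.
  intros. apply Derive_correct. auto.
Qed.

Lemma G_incr g : cost_fn g -> forall x y, 0 < x -> x < y ->
  Derive g x * x - g x < Derive g y * y - g y.
Proof.
  intros Hg. apply (strict_incr (fun r => Derive g r * r - g r) (fun r => Derive (Derive g) r * r)).
  - intros. apply G_deriv; auto.
  - intros. destruct Hg as [H1 [H2 [H3 [H4 _]]]]. specialize (H4 x H). nra.
Qed.

Lemma G_le g x y : cost_fn g -> 0 < x -> x <= y ->
  Derive g x * x - g x <= Derive g y * y - g y.
Proof. intros Hg Hx [H|H]. left; apply G_incr; auto. subst; lra. Qed.

Lemma gp_pos g x : cost_fn g -> 0 < x -> 0 < Derive g x.
Proof. intros [_ [_ [H _]]]; auto. Qed.

Lemma ample_uniq_half (g e : R -> R) ir i k r1 l1 r2 l2 : cost_fn g -> cost_fn e -> 0 <= i ->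
  0 < r1 -> 0 < l1 -> 0 < r2 -> 0 < l2 ->
  (1 + Derive e l1) * (1 + ir - Derive g r1) = 1 + i ->
  (1 + Derive e l2) * (1 + ir - Derive g r2) = 1 + i ->
  Derive g r1 * r1 - g r1 + Derive e l1 * l1 - e l1 = k ->
  Derive g r2 * r2 - g r2 + Derive e l2 * l2 - e l2 = k -> r1 < r2 -> False.
Proof.
  intros Hg He Hi Hr1 Hl1 Hr2 Hl2 E1 E2 K1 K2 Hlt.
  pose proof (G_incr g Hg r1 r2 Hr1 Hlt) as HG.
  assert (Hl : l2 < l1).
  { destruct (Rlt_or_le l2 l1) as [h|h]; auto.
    pose proof (G_le e l1 l2 He Hl1 h). lra. }
  pose proof (gp_incr e He l2 l1 Hl2 Hl) as He1.
  pose proof (gp_incr g Hg r1 r2 Hr1 Hlt) as Hg1.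
  pose proof (gp_pos e l2 He Hl2).
  assert (0 < 1 + ir - Derive g r2) by nra.
  nra.
Qed.

Lemma ample_uniq (g e : R -> R) ir i k r1 l1 r2 l2 : cost_fn g -> cost_fn e -> 0 <= i ->
  0 < r1 -> 0 < l1 -> 0 < r2 -> 0 < l2 ->
  (1 + Derive e l1) * (1 + ir - Derive g r1) = 1 + i ->
  (1 + Derive e l2) * (1 + ir - Derive g r2) = 1 + i ->
  Derive g r1 * r1 - g r1 + Derive e l1 * l1 - e l1 = k ->
  Derive g r2 * r2 - g r2 + Derive e l2 * l2 - e l2 = k -> r1 = r2 /\ l1 = l2.
Proof.
  intros. assert (r1 = r2).
  { destruct (Rtotal_order r1 r2) as [h|[h|h]]; auto; exfalso.
    - exact (ample_uniq_half g e ir i k r1 l1 r2 l2 H H0 H1 H2 H3 H4 H5 H6 H7 H8 H9 h).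
    - exact (ample_uniq_half g e ir i k r2 l2 r1 l1 H H0 H1 H4 H5 H2 H3 H7 H6 H9 H8 h). }
  subst. split; auto.
  destruct (Rtotal_order l1 l2) as [h|[h|h]]; auto; exfalso.
  - pose proof (G_incr e H0 l1 l2 H3 h). lra.
  - pose proof (G_incr e H0 l2 l1 H5 h). lra.
Qed.

Lemma deriv_decr_nonpos (f : R -> R) x0 D : (forall x y, 0 <= x < y -> f y < f x) ->
  0 <= x0 -> is_derive f x0 D -> D <= 0.
Proof.
  intros Hdec Hx H. apply is_derive_Reals in H.
  destruct (Rle_or_lt D 0) as [h|h]; auto. exfalso.
  destruct (H D h) as [del Hdel].
  pose proof (cond_pos del) as Hd.
  assert (Hh : del / 2 <> 0) by lra.
  assert (Ha : Rabs (del / 2) < del) by (rewrite Rabs_right; lra).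
  specialize (Hdel _ Hh Ha).
  assert (Hq : f (x0 + del/2) - f x0 < 0) by (pose proof (Hdec x0 (x0 + del/2)); lra).
  assert (0 < / (del / 2)) by (apply Rinv_0_lt_compat; lra).
  set (q := (f (x0 + del / 2) - f x0) / (del / 2)) in *.
  assert (q < 0) by (unfold q, Rdiv; nra).
  pose proof (Rle_abs (-(q - D))). rewrite Rabs_Ropp in H2. lra.
Qed.

Lemma part1a (E : Econ) (HE : econ_ok E) :
  (forall (ir db i0 : R) (rt lt n : R -> R),
     (exists d, 0 < d /\ forall x, Rabs (x - i0) < d ->
        ample_eq E x ir db (rt x) (lt x) (n x)) ->
     ex_derive rt i0 -> ex_derive lt i0 -> ex_derive n i0 ->
     ex_derive (Linv E) i0 ->
     exists eps, 0 < eps /\ forall mh, 0 < mh < eps ->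
       exists D,
         is_derive (fun x => zeta (cash E x - cash E i0 + mh)
                                  (n x * rt x) (n x * lt x)) i0 D
         /\ 0 < D).
Proof.
  intros ir db i0 rt lt n [d [Hd Hloc]] Hrt Hlt Hn HLd.
  destruct HE as [Hs1 [Hs2 [Hs3 [Hsum [Hchi' [Hk [Hg [He Hdec]]]]]]]].
  assert (Hz : Rabs (i0 - i0) < d) by (rewrite Rminus_diag, Rabs_R0; lra).
  destruct (Hloc i0 Hz) as [Hi [Hr0 [Hl0 [Hn0 [E0 [K0 [_ N0]]]]]]].
  pose proof Hg as [Hg1 [Hg2 [Hg3 [Hg4 _]]]].
  pose proof He as [He1 [He2 [He3 [He4 _]]]].
  assert (Eq1 : Derive (Derive (gam E)) (rt i0) * rt i0 * Derive rt i0
              + Derive (Derive (eta E)) (lt i0) * lt i0 * Derive lt i0 = 0).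
  { apply (deriv_loc_eq (fun x => Derive (gam E) (rt x) * rt x - gam E (rt x)
        + Derive (eta E) (lt x) * lt x - eta E (lt x)) (fun _ => kcost E) i0).
    - apply (loc_of i0 d); auto. intros x Hx.
      destruct (Hloc x Hx) as [_ [_ [_ [_ [_ [Kx _]]]]]]. exact Kx.
    - auto_derive. repeat split; auto. eta. ring.
    - exact (is_derive_const _ _). }
  assert (Eq2 : Derive (Derive (eta E)) (lt i0) * Derive lt i0 * (1 + ir - Derive (gam E) (rt i0))
              - (1 + Derive (eta E) (lt i0)) * Derive (Derive (gam E)) (rt i0) * Derive rt i0 = 1).
  { apply (deriv_loc_eq (fun x => (1 + Derive (eta E) (lt x)) * (1 + ir - Derive (gam E) (rt x)))
        (fun x => 1 + x) i0).
    - apply (loc_of i0 d); auto. intros x Hx.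
      destruct (Hloc x Hx) as [_ [_ [_ [_ [Ex _]]]]]. exact Ex.
    - auto_derive. repeat split; auto. eta. ring.
    - auto_derive; auto; try ring. }
  assert (HM : Derive (Linv E) i0 <= 0).
  { apply (deriv_decr_nonpos (Linv E) i0); auto. apply Derive_correct; auto. }
  pose proof (Hg4 _ Hr0) as Hg2p. pose proof (He4 _ Hl0) as He2p.
  pose proof (He3 _ Hl0) as He1p.
  set (g2 := Derive (Derive (gam E)) (rt i0)) in *.
  set (e2 := Derive (Derive (eta E)) (lt i0)) in *.
  set (e1 := Derive (eta E) (lt i0)) in *.
  set (g1 := Derive (gam E) (rt i0)) in *.
  set (r := rt i0) in *. set (l := lt i0) in *. set (N := n i0) in *.
  set (r' := Derive rt i0) in *. set (l' := Derive lt i0) in *. set (N' := Derive n i0) in *.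
  set (M' := Derive (Linv E) i0) in *.
  assert (HB : 0 < 1 + ir - g1) by nra.
  assert (Hl'eq : e2 * l' * ((1 + ir - g1) * r + (1 + e1) * l) = r).
  { assert (h : e2 * l' * ((1 + ir - g1) * r + (1 + e1) * l)
       = r * (e2 * l' * (1 + ir - g1) - (1 + e1) * g2 * r') + (1 + e1) * (g2 * r * r' + e2 * l * l'))
      by ring.
    rewrite h, Eq2, Eq1. ring. }
  assert (Hl'p : 0 < l').
  { destruct (Rlt_or_le 0 l') as [h|h]; auto.
    assert (0 < (1 + ir - g1) * r) by nra. assert (0 < (1 + e1) * l) by nra.
    assert (0 < e2 * ((1 + ir - g1) * r + (1 + e1) * l)) by nra. nra. }
  assert (HP' : 0 < l' * r - l * r').
  { assert (h : g2 * r * (l' * r - l * r') = l' * (g2 * r * r + e2 * l * l) - l * (g2 * r * r' + e2 * l * l'))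
      by ring.
    rewrite Eq1 in h. assert (0 < g2 * r * r) by (assert (0 < g2 * r) by nra; nra).
    assert (0 < e2 * l * l) by (assert (0 < e2 * l) by nra; nra).
    assert (0 < l' * (g2 * r * r + e2 * l * l)) by nra.
    assert (0 < g2 * r) by nra.
    destruct (Rlt_or_le 0 (l' * r - l * r')) as [hh|hh]; auto. nra. }
  set (P := N * N * (l' * r - l * r')).
  assert (HP : 0 < P) by (unfold P; assert (0 < N * N) by nra; nra).
  set (L' := N' * l + N * l').
  exists (P / (Rabs L' + 1)). split.
  { apply Rdiv_lt_0_compat; auto. pose proof (Rabs_pos L'); lra. }
  intros mh [Hmh Hmh2].
  assert (Hden : 0 < mh + N * r) by nra.
  exists ((P + L' * mh - N * l * (s1 E * M')) / (mh + N * r) ^ 2). split.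
  - unfold zeta, cash. auto_derive.
    + repeat split; auto. fold r N. lra.
    + eta. fold r l N r' l' N' M'. unfold P, L'. field. fold r N. lra.
  - apply Rdiv_lt_0_compat; [|nra].
    assert (mh * (Rabs L' + 1) < P).
    { pose proof (Rabs_pos L').
      apply (Rmult_lt_compat_r (Rabs L' + 1)) in Hmh2; [|lra].
      unfold Rdiv in Hmh2. rewrite Rmult_assoc, Rinv_l, Rmult_1_r in Hmh2; lra. }
    pose proof (Rle_abs (- L')). rewrite Rabs_Ropp in H0.
    assert (0 <= - (N * l * (s1 E * M'))).
    { assert (0 < N * l) by nra. assert (0 < N * l * s1 E) by nra. nra. }
    assert (- L' * mh <= Rabs L' * mh) by nra.
    nra.
Qed.

Lemma part1b (E : Econ) (HE : econ_ok E) :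
  (forall (i db ir0 : R) (rt lt n : R -> R),
     (exists d, 0 < d /\ forall y, Rabs (y - ir0) < d ->
        ample_eq E i y db (rt y) (lt y) (n y)) ->
     ex_derive rt ir0 -> ex_derive lt ir0 -> ex_derive n ir0 ->
     exists eps, 0 < eps /\ forall mh, 0 < mh < eps ->
       exists D,
         is_derive (fun y => zeta mh (n y * rt y) (n y * lt y)) ir0 D
         /\ D < 0).
Proof.
  intros i db i0 rt lt n [d [Hd Hloc]] Hrt Hlt Hn.
  destruct HE as [Hs1 [Hs2 [Hs3 [Hsum [Hchi' [Hk [Hg [He Hdec]]]]]]]].
  assert (Hz : Rabs (i0 - i0) < d) by (rewrite Rminus_diag, Rabs_R0; lra).
  destruct (Hloc i0 Hz) as [Hi [Hr0 [Hl0 [Hn0 [E0 [K0 [_ N0]]]]]]].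
  pose proof Hg as [Hg1 [Hg2 [Hg3 [Hg4 _]]]].
  pose proof He as [He1 [He2 [He3 [He4 _]]]].
  assert (Eq1 : Derive (Derive (gam E)) (rt i0) * rt i0 * Derive rt i0
              + Derive (Derive (eta E)) (lt i0) * lt i0 * Derive lt i0 = 0).
  { apply (deriv_loc_eq (fun x => Derive (gam E) (rt x) * rt x - gam E (rt x)
        + Derive (eta E) (lt x) * lt x - eta E (lt x)) (fun _ => kcost E) i0).
    - apply (loc_of i0 d); auto. intros x Hx.
      destruct (Hloc x Hx) as [_ [_ [_ [_ [_ [Kx _]]]]]]. exact Kx.
    - auto_derive. repeat split; auto. eta. ring.
    - exact (is_derive_const _ _). }
  assert (Eq2 : Derive (Derive (eta E)) (lt i0) * Derive lt i0 * (1 + i0 - Derive (gam E) (rt i0))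
              + (1 + Derive (eta E) (lt i0)) * (1 - Derive (Derive (gam E)) (rt i0) * Derive rt i0) = 0).
  { apply (deriv_loc_eq (fun x => (1 + Derive (eta E) (lt x)) * (1 + x - Derive (gam E) (rt x)))
        (fun x => 1 + i) i0).
    - apply (loc_of i0 d); auto. intros x Hx.
      destruct (Hloc x Hx) as [_ [_ [_ [_ [Ex _]]]]]. exact Ex.
    - auto_derive. repeat split; auto. eta. ring.
    - exact (is_derive_const _ _). }
  pose proof (Hg4 _ Hr0) as Hg2p. pose proof (He4 _ Hl0) as He2p.
  pose proof (He3 _ Hl0) as He1p.
  set (g2 := Derive (Derive (gam E)) (rt i0)) in *.
  set (e2 := Derive (Derive (eta E)) (lt i0)) in *.
  set (e1 := Derive (eta E) (lt i0)) in *.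
  set (g1 := Derive (gam E) (rt i0)) in *.
  set (r := rt i0) in *. set (l := lt i0) in *. set (N := n i0) in *.
  set (r' := Derive rt i0) in *. set (l' := Derive lt i0) in *. set (N' := Derive n i0) in *.
  assert (HB : 0 < 1 + i0 - g1) by nra.
  assert (Hl'eq : e2 * l' * ((1 + i0 - g1) * r + (1 + e1) * l) = - ((1 + e1) * r)).
  { assert (h : e2 * l' * ((1 + i0 - g1) * r + (1 + e1) * l)
       = r * (e2 * l' * (1 + i0 - g1) + (1 + e1) * (1 - g2 * r')) + (1 + e1) * (g2 * r * r' + e2 * l * l')
         - (1 + e1) * r)
      by ring.
    rewrite h, Eq2, Eq1. ring. }
  assert (Hl'p : l' < 0).
  { destruct (Rlt_or_le l' 0) as [h|h]; auto.
    assert (0 < (1 + i0 - g1) * r) by nra. assert (0 < (1 + e1) * l) by nra.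
    assert (0 < e2 * ((1 + i0 - g1) * r + (1 + e1) * l)) by nra.
    assert (0 < (1 + e1) * r) by nra. nra. }
  assert (HP' : l' * r - l * r' < 0).
  { assert (h : g2 * r * (l' * r - l * r') = l' * (g2 * r * r + e2 * l * l) - l * (g2 * r * r' + e2 * l * l'))
      by ring.
    rewrite Eq1 in h. assert (0 < g2 * r * r) by (assert (0 < g2 * r) by nra; nra).
    assert (0 < e2 * l * l) by (assert (0 < e2 * l) by nra; nra).
    assert (l' * (g2 * r * r + e2 * l * l) < 0) by nra.
    assert (0 < g2 * r) by nra.
    destruct (Rlt_or_le (l' * r - l * r') 0) as [hh|hh]; auto. nra. }
  set (P := N * N * (l' * r - l * r')).
  assert (HP : P < 0) by (unfold P; assert (0 < N * N) by nra; nra).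
  set (L' := N' * l + N * l').
  exists (- P / (Rabs L' + 1)). split.
  { apply Rdiv_lt_0_compat; [lra|]. pose proof (Rabs_pos L'); lra. }
  intros mh [Hmh Hmh2].
  assert (Hden : 0 < mh + N * r) by nra.
  exists ((P + L' * mh) / (mh + N * r) ^ 2). split.
  - unfold zeta. auto_derive.
    + repeat split; auto. fold r N. lra.
    + eta. fold r l N r' l' N'. unfold P, L'. field. fold r N. lra.
  - assert (mh * (Rabs L' + 1) < - P).
    { pose proof (Rabs_pos L').
      apply (Rmult_lt_compat_r (Rabs L' + 1)) in Hmh2; [|lra].
      unfold Rdiv in Hmh2. rewrite Rmult_assoc, Rinv_l, Rmult_1_r in Hmh2; lra. }
    pose proof (Rle_abs L').
    assert (L' * mh <= Rabs L' * mh) by nra.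
    assert (0 < / (mh + N * r) ^ 2) by (apply Rinv_0_lt_compat; nra).
    unfold Rdiv. assert (P + L' * mh < 0) by nra. nra.
Qed.

Lemma part2a (E : Econ) (HE : econ_ok E) :
  (forall (i ir db0 : R) (rt lt n : R -> R),
     (exists d, 0 < d /\ forall x, Rabs (x - db0) < d ->
        ample_eq E i ir x (rt x) (lt x) (n x)) ->
     ex_derive rt db0 -> ex_derive lt db0 -> ex_derive n db0 ->
     Linv E (Derive (eta E) (lt db0)) > db0 ->
     0 < cash E i -> chi E < 1 ->
     exists D,
       is_derive (fun x => zeta (cash E i) (n x * rt x) (n x * lt x)) db0 D
       /\ D < 0).
Proof.
  intros i ir db0 rt lt n [d [Hd Hloc]] Hrt Hlt Hn HL Hm Hchi.
  destruct HE as [Hs1 [Hs2 [Hs3 [Hsum [Hchi' [Hk [Hg [He Hdec]]]]]]]].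
  assert (Hz : Rabs (db0 - db0) < d) by (rewrite Rminus_diag, Rabs_R0; lra).
  destruct (Hloc db0 Hz) as [Hi [Hr0 [Hl0 [Hn0 [E0 [K0 [_ N0]]]]]]].
  assert (Hconst : forall x, Rabs (x - db0) < d -> rt x = rt db0 /\ lt x = lt db0).
  { intros x Hx. destruct (Hloc x Hx) as [_ [Hr [Hl [_ [E1 [K1 _]]]]]].
    apply (ample_uniq (gam E) (eta E) ir i (kcost E)); auto. }
  assert (Hr' : Derive rt db0 = 0).
  { apply (deriv_loc_eq rt (fun _ => rt db0) db0).
    - apply (loc_of db0 d); auto. intros x Hx. apply Hconst; auto.
    - apply Derive_correct; auto.
    - exact (is_derive_const _ _). }
  assert (Hl' : Derive lt db0 = 0).
  { apply (deriv_loc_eq lt (fun _ => lt db0) db0).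
    - apply (loc_of db0 d); auto. intros x Hx. apply Hconst; auto.
    - apply Derive_correct; auto.
    - exact (is_derive_const _ _). }
  pose proof (gp_pos (eta E) (lt db0) He Hl0) as He1.
  set (A := (1 + (ir - Derive (gam E) (rt db0))) * rt db0 + lt db0).
  assert (HA : 0 < A).
  { unfold A. assert (0 < 1 + ir - Derive (gam E) (rt db0)) by nra. nra. }
  assert (Hn' : Derive n db0 * A = - s3 E).
  { apply (deriv_loc_eq (fun x => n x * A)
      (fun x => (s2 E + s3 E) * Linv E (Derive (eta E) (lt db0)) - s3 E * x) db0).
    - apply (loc_of db0 d); auto. intros x Hx.
      destruct (Hconst x Hx) as [h1 h2].
      destruct (Hloc x Hx) as [_ [_ [_ [_ [_ [_ [_ Nx]]]]]]].
      rewrite h1, h2 in Nx. unfold A. lra.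
    - auto_derive; auto. eta. ring.
    - auto_derive; auto. ring. }
  assert (Hneg : Derive n db0 < 0).
  { destruct (Rlt_or_le (Derive n db0) 0) as [h|h]; auto. nra. }
  set (m := cash E i) in *.
  assert (Hden : 0 < m + n db0 * rt db0) by nra.
  exists (Derive n db0 * lt db0 * m / (m + n db0 * rt db0) ^ 2). split.
  - unfold zeta. auto_derive.
    + repeat split; auto. lra.
    + eta. rewrite Hr', Hl'. field. lra.
  - assert (0 < / (m + n db0 * rt db0) ^ 2) by (apply Rinv_0_lt_compat; nra).
    unfold Rdiv. assert (Derive n db0 * lt db0 * m < 0).
    { assert (0 < lt db0 * m) by nra. nra. }
    nra.
Qed.

Lemma scarce_rt_half (g e : R -> R) a k r1 r2 : cost_fn g -> cost_fn e -> 0 < a ->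
  0 < r1 -> r1 < r2 ->
  Derive g r1 * r1 - g r1 + Derive e (a * r1) * (a * r1) - e (a * r1) = k ->
  Derive g r2 * r2 - g r2 + Derive e (a * r2) * (a * r2) - e (a * r2) = k -> False.
Proof.
  intros Hg He Ha H1 H12 K1 K2.
  pose proof (G_incr g Hg r1 r2 H1 H12).
  assert (0 < a * r1) by nra. assert (a * r1 < a * r2) by nra.
  pose proof (G_incr e He (a*r1) (a*r2) H0 H2). lra.
Qed.

Lemma quad_half a i id1 il1 id2 il2 : 0 < a -> 0 <= i -> 0 < il1 -> 0 < il2 ->
  1 + i = (1 + id1) * (1 + il1) -> 1 + i = (1 + id2) * (1 + il2) ->
  id1 - id2 = (il1 - il2) * a -> il1 < il2 -> False.
Proof.
  intros Ha Hi H1 H2 E1 E2 D Hlt.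
  assert (id1 < id2) by nra.
  assert (0 < 1 + id1) by nra.
  nra.
Qed.

Lemma part2b (E : Econ) (HE : econ_ok E) :
  (forall (i ir db0 : R) (rt id il r : R -> R),
     (exists d, 0 < d /\ forall x, Rabs (x - db0) < d ->
        scarce_eq E i ir x (rt x) (id x) (il x) (r x)) ->
     ex_derive rt db0 -> ex_derive id db0 -> ex_derive il db0 ->
     ex_derive r db0 ->
     Linv E (il db0) > db0 ->
     0 < cash E i -> chi E < 1 ->
     exists D,
       is_derive (fun x => zeta (cash E i) (r x) (acoef E * r x)) db0 D
       /\ D < 0).
Proof.
  intros i ir db0 rt id il r [d [Hd Hloc]] Hrt Hid Hil Hr HL Hm Hchi.
  destruct HE as [Hs1 [Hs2 [Hs3 [Hsum [Hchi' [Hk [Hg [He Hdec]]]]]]]].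
  assert (Ha : 0 < acoef E) by (unfold acoef; apply Rdiv_lt_0_compat; lra).
  assert (Hz : Rabs (db0 - db0) < d) by (rewrite Rminus_diag, Rabs_R0; lra).
  destruct (Hloc db0 Hz) as [Hi [Hr0 [Hrr0 [Hil0 [K0 [I0 [P0 R0]]]]]]].
  assert (Hrc : forall x, Rabs (x - db0) < d -> rt x = rt db0).
  { intros x Hx. destruct (Hloc x Hx) as [_ [Hrx [_ [_ [Kx _]]]]].
    destruct (Rtotal_order (rt x) (rt db0)) as [h|[h|h]]; auto; exfalso.
    - exact (scarce_rt_half _ _ (acoef E) _ _ _ Hg He Ha Hrx h Kx K0).
    - exact (scarce_rt_half _ _ (acoef E) _ _ _ Hg He Ha Hr0 h K0 Kx). }
  assert (Hilc : forall x, Rabs (x - db0) < d -> il x = il db0 /\ id x = id db0).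
  { intros x Hx. pose proof (Hrc x Hx) as hr.
    destruct (Hloc x Hx) as [_ [Hrx [_ [Hilx [Kx [Ix [Px _]]]]]]].
    rewrite hr in Hilx, Ix.
    pose proof (gp_pos (eta E) ((acoef E) * rt db0) He ltac:(nra)).
    assert (Dd : id x - id db0 = (il x - il db0) * (acoef E)) by (rewrite Ix, I0; ring).
    assert (Dd' : id db0 - id x = (il db0 - il x) * (acoef E)) by (rewrite Ix, I0; ring).
    assert (H1 : il x = il db0).
    { destruct (Rtotal_order (il x) (il db0)) as [h|[h|h]]; auto; exfalso.
      - exact (quad_half (acoef E) i (id x) (il x) (id db0) (il db0) Ha Hi ltac:(lra) ltac:(lra) Px P0 Dd h).
      - exact (quad_half (acoef E) i (id db0) (il db0) (id x) (il x) Ha Hi ltac:(lra) ltac:(lra) P0 Px Dd' h). }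
    split; auto. assert (hh : (il x - il db0) * acoef E = 0) by (rewrite H1; ring). lra. }
  pose proof (gp_pos (eta E) ((acoef E) * rt db0) He ltac:(nra)).
  assert (Hid1 : 0 < 1 + id db0) by nra.
  assert (Hc : 0 < 1 + id db0 * chi E).
  { destruct (Rle_or_lt 0 (id db0)). nra. nra. }
  assert (Hr' : Derive r db0 = - s3 E * chi E / (1 + id db0 * chi E)).
  { apply (deriv_loc_eq r (fun x => (s2 E + s3 E) * chi E / (1 + id db0 * chi E) * Linv E (il db0)
      - s3 E * x * chi E / (1 + id db0 * chi E)) db0).
    - apply (loc_of db0 d); auto. intros x Hx.
      destruct (Hilc x Hx) as [h1 h2].
      destruct (Hloc x Hx) as [_ [_ [_ [_ [_ [_ [_ Rx]]]]]]].
      rewrite h1, h2 in Rx. exact Rx.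
    - apply Derive_correct; auto.
    - auto_derive. lra. field. lra. }
  assert (Hneg : Derive r db0 < 0).
  { rewrite Hr'. unfold Rdiv. assert (0 < / (1 + id db0 * chi E)) by (apply Rinv_0_lt_compat; lra).
    assert (0 < s3 E * chi E) by nra. nra. }
  set (m := cash E i) in *.
  assert (Hden : 0 < m + r db0) by lra.
  exists ((acoef E) * Derive r db0 * m / (m + r db0) ^ 2). split.
  - unfold zeta. auto_derive.
    + repeat split; auto. lra.
    + eta. field. lra.
  - assert (0 < / (m + r db0) ^ 2) by (apply Rinv_0_lt_compat; nra).
    unfold Rdiv. assert ((acoef E) * Derive r db0 * m < 0).
    { assert (0 < (acoef E) * m) by nra. nra. }
    nra.
Qed.

Theorem proposition6 (E : Econ) (HE : econ_ok E) :
  (* (i-a) ample reserves, d zeta / d i > 0 for m small, holding the other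
     quantities and all derivatives (including dm/di) fixed *)
  (forall (ir db i0 : R) (rt lt n : R -> R),
     (exists d, 0 < d /\ forall x, Rabs (x - i0) < d ->
        ample_eq E x ir db (rt x) (lt x) (n x)) ->
     ex_derive rt i0 -> ex_derive lt i0 -> ex_derive n i0 ->
     ex_derive (Linv E) i0 ->
     exists eps, 0 < eps /\ forall mh, 0 < mh < eps ->
       exists D,
         is_derive (fun x => zeta (cash E x - cash E i0 + mh)
                                  (n x * rt x) (n x * lt x)) i0 D
         /\ 0 < D)
  /\
  (* (i-b) ample reserves, d zeta / d i_r < 0 for m small *)
  (forall (i db ir0 : R) (rt lt n : R -> R),
     (exists d, 0 < d /\ forall y, Rabs (y - ir0) < d ->
        ample_eq E i y db (rt y) (lt y) (n y)) ->
     ex_derive rt ir0 -> ex_derive lt ir0 -> ex_derive n ir0 ->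
     exists eps, 0 < eps /\ forall mh, 0 < mh < eps ->
       exists D,
         is_derive (fun y => zeta mh (n y * rt y) (n y * lt y)) ir0 D
         /\ D < 0)
  /\
  (* (ii-a) ample reserves, d zeta / d dbar < 0 *)
  (forall (i ir db0 : R) (rt lt n : R -> R),
     (exists d, 0 < d /\ forall x, Rabs (x - db0) < d ->
        ample_eq E i ir x (rt x) (lt x) (n x)) ->
     ex_derive rt db0 -> ex_derive lt db0 -> ex_derive n db0 ->
     Linv E (Derive (eta E) (lt db0)) > db0 ->
     0 < cash E i -> chi E < 1 ->
     exists D,
       is_derive (fun x => zeta (cash E i) (n x * rt x) (n x * lt x)) db0 D
       /\ D < 0)
  /\
  (* (ii-b) scarce reserves, d zeta / d dbar < 0 *)
  (forall (i ir db0 : R) (rt id il r : R -> R),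
     (exists d, 0 < d /\ forall x, Rabs (x - db0) < d ->
        scarce_eq E i ir x (rt x) (id x) (il x) (r x)) ->
     ex_derive rt db0 -> ex_derive id db0 -> ex_derive il db0 ->
     ex_derive r db0 ->
     Linv E (il db0) > db0 ->
     0 < cash E i -> chi E < 1 ->
     exists D,
       is_derive (fun x => zeta (cash E i) (r x) (acoef E * r x)) db0 D
       /\ D < 0).
Proof.
  split; [exact (part1a E HE)|].
  split; [exact (part1b E HE)|].
  split; [exact (part2a E HE)|].
  exact (part2b E HE).
Qed.
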